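(* Let $G$ be a connected graph with girth at least $5$, let $w\in V(G)$, and let $T$ be a breadth-first spanning tree of $G$ rooted at $w$, with vertex order $\sigma$. Let $\sigma'$ be a non-empty prefix of $\sigma$, let $\varphi'$ be a proper coloring of the subgraph induced by $\sigma'$, and let $\varphi$ be a greedy coloring of $G$ with respect to $\sigma$ and $\varphi'$. If $\varphi$ fixes each vertex of $\sigma'$, then $\varphi$ is a proper distinguishing coloring of $G$.
   Context: A coloring of $G$ is a map $\varphi:V(G)\to\mathbb{Z}_{>0}$; it is proper if adjacent vertices get different colors. A vertex $u$ is fixed by $\varphi$ if every automorphism $f$ of $G$ with $\varphi(f(v))=\varphi(v)$ for all $v$ satisfies $f(u)=u$. A coloring is distinguishing if it fixes every vertex, i.e. the only color-preserving automorphism is the identity. In a breadth-first spanning tree $T$ rooted at $w$, $\sigma$ is the order in which vertices are visited by the breadth-first search (so $w$ is first and parents precede children); each vertex $v\neq w$ has a parent in $T$, and the siblings of $v$ are the other children of its parent. For $v\in V(G)$, $\sigma_v$ denotes the set of vertices preceding $v$ in $\sigma$; a prefix $\sigma'$ of $\sigma$ is identified with its set of vertices. Greedy coloring with respect to $\sigma$ and $\varphi'$: extend $\varphi'$ to $\varphi$ by coloring each $v\in\sigma\setminus\sigma'$ in the order $\sigma$ as follows. (i) If $v$ has a neighbor in $\sigma_v$ other than its parent, then $\varphi(v)$ is the smallest positive integer not used on $N(v)\cap\sigma_v$. (ii) Otherwise, $\varphi(v)$ is the smallest positive integer not used on $\sigma_v\cap S_v$, where $S_v$ is the set consisting of the parent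 and the siblings of $v$. *)

(* Defs.v *)
From mathcomp Require Import all_boot fingroup perm.
Set Implicit Arguments. Unset Strict Implicit. Unset Printing Implicit Defensive.

Section Defs.
Variable V : finType.

Definition simple_graph (e : rel V) : Prop :=
  symmetric e /\ irreflexive e.

Definition connected_graph (e : rel V) : Prop :=
  forall x y : V, connect e x y.

Definition girth_ge5 (e : rel V) : Prop :=
  (forall a b c : V, ~ [&& e a b, e b c & e c a]) /\
  (forall a b c d : V, a != c -> b != d ->
       ~ [&& e a b, e b c, e c d & e d a]).

(* sigma is a breadth-first search order of the whole vertex set starting at w,
   and par is the parent function of the associated BFS spanning tree T:
   the parent of v <> w is its earliest-visited neighbour, which precedes v,
   and the order of discovery is monotone in the order of the parents. *)
Definition bfs_tree (e : rel V) (w : V) (sigma : seq V) (par : V -> V) : Prop :=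
  [/\ [/\ uniq sigma, (forall v : V, v \in sigma), head w sigma = w & sigma != [::]],
      (forall v : V, v != w ->
          [/\ e (par v) v, index (par v) sigma < index v sigma &
              forall u : V, e u v -> index (par v) sigma <= index u sigma]) &
      (forall u v : V, u != w -> v != w -> index u sigma < index v sigma ->
          index (par u) sigma <= index (par v) sigma)].

Definition before (sigma : seq V) (v : V) : seq V := take (index v sigma) sigma.

Definition least_missing (c : nat) (s : seq nat) : Prop :=
  [/\ 0 < c, c \notin s & forall d : nat, 0 < d < c -> d \in s].

Definition greedy_coloring (e : rel V) (w : V) (sigma : seq V) (par : V -> V)
    (k : nat) (phi' phi : V -> nat) : Prop :=
  (forall v : V, v \in take k sigma -> phi v = phi' v) /\
  (forall v : V, v \in drop k sigma ->
     let sv := before sigma v in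
     if has (fun u => e u v && (u != par v)) sv then
       least_missing (phi v) [seq phi u | u <- sv & e u v]
     else
       (* S_v = parent of v together with the siblings of v *)
       least_missing (phi v)
         [seq phi u | u <- sv & (u == par v) || ((u != w) && (par u == par v))]).

Definition proper_coloring (e : rel V) (phi : V -> nat) : Prop :=
  forall x y : V, e x y -> phi x != phi y.

Definition automorphism (e : rel V) (f : {perm V}) : Prop :=
  forall x y : V, e (f x) (f y) = e x y.

Definition color_preserving (phi : V -> nat) (f : {perm V}) : Prop :=
  forall v : V, phi (f v) = phi v.

Definition fixes (e : rel V) (phi : V -> nat) (u : V) : Prop :=
  forall f : {perm V}, automorphism e f -> color_preserving phi f -> f u = u.

Definition distinguishing (e : rel V) (phi : V -> nat) : Prop :=
  forall u : V, fixes e phi u.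

End Defs.

(* Main.v *)
Require Import Defs.
From mathcomp Require Import all_boot fingroup perm.

Theorem lemma2 (V : finType) (e : rel V) (w : V) (sigma : seq V) (par : V -> V)
    (k : nat) (phi' phi : V -> nat) :
  simple_graph e -> connected_graph e -> girth_ge5 e ->
  bfs_tree e w sigma par ->
  0 < k <= size sigma ->
  (forall v : V, v \in take k sigma -> 0 < phi' v) ->
  (forall x y : V, x \in take k sigma -> y \in take k sigma ->
      e x y -> phi' x != phi' y) ->
  greedy_coloring e w sigma par k phi' phi ->
  (forall u : V, u \in take k sigma -> fixes e phi u) ->
  (forall v : V, 0 < phi v) /\ proper_coloring e phi /\ distinguishing e phi.
Proof.
move=> [esym eirr] _ [notri nosq] [[usig allin hw sne] Hpar Hmono] /andP[k0 ksz]
  pos' prop' [Hpre Hgr] Hfix.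
have {}Hgr : forall v, v \in drop k sigma ->
     if has (fun u => e u v && (u != par v)) (before sigma v) then
       [/\ 0 < phi v, phi v \notin [seq phi u | u <- before sigma v & e u v] &
         forall d : nat, 0 < d < phi v -> d \in [seq phi u | u <- before sigma v & e u v]]
     else
       [/\ 0 < phi v, phi v \notin [seq phi u | u <- before sigma v & (u == par v) || ((u != w) && (par u == par v))] &
         forall d : nat, 0 < d < phi v -> d \in [seq phi u | u <- before sigma v & (u == par v) || ((u != w) && (par u == par v))]].
  exact: Hgr.
have idx_inj : forall x y, index x sigma = index y sigma -> x = y.
  by move=> x y h; rewrite -(nth_index x (allin x)) h nth_index.
have iw : index w sigma = 0.
  by move: hw sne; case: (sigma) => [|a s] //= -> _; rewrite eqxx.
have inbefore : forall x v, (x \in before sigma v) = (index x sigma < index v sigma).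
  by move=> x v; rewrite /before in_take.
have intake : forall x, (x \in take k sigma) = (index x sigma < k).
  by move=> x; rewrite in_take.
have indrop : forall x, k <= index x sigma -> x \in drop k sigma.
  move=> x hx; move: (allin x); rewrite -{1}(cat_take_drop k sigma) mem_cat intake.
  by rewrite ltnNge hx.
have notw : forall x, 0 < index x sigma -> x != w.
  by move=> x hx; apply/eqP => hxw; rewrite hxw iw in hx.
split.
  move=> v; case: (ltnP (index v sigma) k) => h.
    by rewrite Hpre ?intake //; apply: pos'; rewrite intake.
  by move: (Hgr v (indrop v h)); case: ifP => _ [].
split.
  move=> x y exy.
  wlog lt : x y exy / index x sigma < index y sigma.
    move=> H; case: (ltngtP (index x sigma) (index y sigma)) => h.
    - exact: H.
    - by rewrite eq_sym; apply: H => //; rewrite esym.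
    - by move: (idx_inj _ _ h) exy => ->; rewrite eirr.
  case: (ltnP (index y sigma) k) => hy.
    rewrite !Hpre ?intake //; last exact: ltn_trans lt hy.
    by apply: prop' => //; rewrite intake //; exact: ltn_trans lt hy.
  have xb : x \in before sigma y by rewrite inbefore.
  move: (Hgr y (indrop y hy)); case: ifP => hh [_ nin _].
    rewrite eq_sym; apply/eqP => E; move: nin; rewrite E.
    by rewrite map_f // mem_filter exy.
  have xp : x = par y.
    apply/eqP; apply/negPn/negP => hne; move/negbT: hh => /hasPn /(_ x xb).
    by rewrite exy hne.
  rewrite eq_sym; apply/eqP => E; move: nin; rewrite E.
  by rewrite map_f // mem_filter xb xp eqxx.
move=> u0 f aut cp.
suff H : forall n v, index v sigma < n -> f v = v by exact: (H (index u0 sigma).+1).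
elim=> [//|n IH] v hv.
case: (ltnP (index v sigma) n) => [|hge]; first exact: IH.
have IHv : forall z, index z sigma < index v sigma -> f z = z.
  by move=> z hz; apply: IH; exact: leq_trans hz hv.
case: (ltnP (index v sigma) k) => hk.
  by apply: (Hfix v _ f aut cp); rewrite intake.
have vnw : v != w by apply: notw; exact: leq_trans k0 hk.
case: (ltnP (index (f v) sigma) (index v sigma)) => hfv.
  by apply: (@perm_inj _ f); rewrite IHv.
case: (eqVneq (f v) v) => // fvne.
set u := f v in hfv fvne.
have ivu : index v sigma < index u sigma.
  rewrite ltn_neqAle hfv andbT; apply/eqP => h.
  by move: fvne; rewrite (idx_inj _ _ h) eqxx.
have Fz : forall z, index z sigma < index v sigma -> e z u = e z v.
  by move=> z hz; rewrite /u -{1}(IHv z hz) aut.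
have [epv ipv _] := Hpar v vnw.
have epu : e (par v) u by rewrite Fz.
move: (Hgr v (indrop v hk)); case: ifP => hcase.
  case/hasP: hcase => y; rewrite inbefore => yb /andP[eyv ynp].
  have eyu : e y u by rewrite Fz.
  exfalso; apply: (nosq (par v) v y u); first by rewrite eq_sym.
    by rewrite eq_sym.
  by rewrite epv esym eyv eyu esym epu.
move=> _.
have Hz : forall z, index z sigma < index v sigma -> e z v -> z = par v.
  move=> z hz ezv; apply/eqP/negPn/negP => hne.
  by move/negbT: hcase => /hasPn /(_ z); rewrite inbefore hz ezv hne => /(_ isT).
have unw : u != w by apply: notw; exact: leq_ltn_trans (leq0n _) ivu.
have [epu' ipu minu] := Hpar u unw.
have pu : par u = par v.
  apply: Hz; first exact: leq_ltn_trans (minu _ epu) ipv.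
  by rewrite -Fz // (leq_ltn_trans (minu _ epu) ipv).
have ukd : k <= index u sigma by apply: leq_trans hk (ltnW ivu).
move: (Hgr u (indrop u ukd)); case: ifP => hcu.
  case/hasP: hcu => x; rewrite inbefore => xb /andP[exu xnp].
  case: (ltnP (index x sigma) (index v sigma)) => hxv.
    by move: xnp; rewrite pu (Hz x hxv) ?eqxx // -Fz.
  case: (eqVneq x v) => [xv|xnv]; first subst x.
    by exfalso; apply: (notri (par v) v u); rewrite epv exu [e u _]esym epu.
  have ivx : index v sigma < index x sigma.
    rewrite ltn_neqAle hxv andbT; apply/eqP => h.
    by move: xnv; rewrite (idx_inj _ _ h) eqxx.
  have xnw : x != w by apply: notw; exact: leq_ltn_trans (leq0n _) ivx.
  have h1 := Hmono v x vnw xnw ivx.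
  have h2 := Hmono x u xnw unw xb.
  rewrite pu in h2.
  have px : par x = par v by apply: idx_inj; apply/eqP; rewrite eqn_leq h1 h2.
  have [epx _ _] := Hpar x xnw.
  by exfalso; apply: (notri (par v) x u); rewrite -{1}px epx exu [e u _]esym epu.
move=> [_ nin _]; exfalso; move: nin; rewrite /u cp.
rewrite map_f // mem_filter inbefore ivu andbT pu vnw eqxx.
by rewrite orbT.
Qed.
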